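(* For every integer $n\ge 4$, $\mathrm{wdim}_2(K_n\times K_n)=n+\lceil n/3\rceil$.
   Context: $K_n\times K_n$ is the direct product of two complete graphs on $n$ vertices: vertex set $[n]\times[n]$ with $[n]=\{1,\dots,n\}$, and $(i,j)$ adjacent to $(i',j')$ iff $i\ne i'$ and $j\ne j'$. For a connected graph $G$ with distance $d_G$, vertices $x,y,z$ and $S\subseteq V(G)$, let $\Delta_z(x,y)=|d_G(x,z)-d_G(y,z)|$ and $\Delta_S(x,y)=\sum_{z\in S}\Delta_z(x,y)$. A set $S$ is a weak $k$-resolving set if $\Delta_S(x,y)\ge k$ for all distinct $x,y\in V(G)$, and $\mathrm{wdim}_k(G)$ (the weak $k$-metric dimension) is the minimum cardinality of a weak $k$-resolving set of $G$. *)

(* Defs.v *)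
From mathcomp Require Import all_boot.
Set Implicit Arguments. Unset Strict Implicit. Unset Printing Implicit Defensive.

Fixpoint ball (T : finType) (e : rel T) (x : T) (k : nat) : {set T} :=
  match k with
  | 0 => [set x]
  | k'.+1 => ball e x k' :|: [set y | [exists z in ball e x k', e z y]]
  end.

(* Graph distance d_G(x,y): least k with y in ball k (correct whenever y is
   reachable from x, in particular in any connected graph; every shortest
   path has length < #|T|). *)
Definition gdist (T : finType) (e : rel T) (x y : T) : nat :=
  find (fun k => y \in ball e x k) (iota 0 #|T|).

Definition absdiff (a b : nat) : nat := (a - b) + (b - a).

Definition Delta (T : finType) (e : rel T) (z x y : T) : nat :=
  absdiff (gdist e x z) (gdist e y z).

Definition DeltaS (T : finType) (e : rel T) (S : {set T}) (x y : T) : nat :=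
  \sum_(z in S) Delta e z x y.

Definition weak_resolving (T : finType) (e : rel T) (k : nat) (S : {set T}) : Prop :=
  forall x y : T, x != y -> k <= DeltaS e S x y.

Definition is_wdim (T : finType) (e : rel T) (k m : nat) : Prop :=
  (exists S : {set T}, weak_resolving e k S /\ #|S| = m) /\
  (forall S : {set T}, weak_resolving e k S -> m <= #|S|).

Definition KnxKn_adj (n : nat) : rel ('I_n * 'I_n) :=
  fun u v => (u.1 != v.1) && (u.2 != v.2).

(* Main.v *)
Require Import Defs.
From mathcomp Require Import all_boot.
From mathcomp Require Import zify.
Set Implicit Arguments. Unset Strict Implicit. Unset Printing Implicit Defensive.

Lemma other2 n (hn : 3 <= n) (a b : 'I_n) : exists c : 'I_n, (c != a) && (c != b).
Proof.
have : 0 < #|~: [set a; b]|.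
  have := cardsC [set a; b]; rewrite cards2 card_ord; case: (a != b) => /=; lia.
case/card_gt0P => c; rewrite !inE negb_or => H; by exists c.
Qed.

Lemma gdistE n (hn : 3 <= n) (x y : 'I_n * 'I_n) :
  gdist (@KnxKn_adj n) x y = if x == y then 0 else if (x.1 != y.1) && (x.2 != y.2) then 1 else 2.
Proof.
rewrite /gdist card_prod card_ord.
have -> : n * n = (n * n - 3).+3 by nia.
rewrite /= !inE.
have E1 : [exists z in [set x], KnxKn_adj z y] = KnxKn_adj x y.
  apply/existsP/idP => [[z /andP[]]|H]; first by rewrite inE => /eqP ->.
  by exists x; rewrite inE eqxx.
rewrite E1 (eq_sym y x).
case: (x =P y) => //= _.
case Hxy: (KnxKn_adj x y) => /=; first by rewrite /KnxKn_adj in Hxy; rewrite Hxy.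
rewrite /KnxKn_adj in Hxy; rewrite Hxy.
have [a Ha] := other2 hn x.1 y.1.
have [b Hb] := other2 hn x.2 y.2.
suff -> : [exists z in x |: [set y0 | [exists z0 in [set x], KnxKn_adj z0 y0]], KnxKn_adj z y] by [].
apply/existsP; exists (a, b); rewrite !inE /KnxKn_adj /=.
move: Ha Hb => /andP[Ha1 Ha2] /andP[Hb1 Hb2].
rewrite Ha2 Hb2 /= andbT; apply/orP; right; apply/existsP; exists x.
by rewrite inE eqxx /= eq_sym Ha1 eq_sym Hb1.
Qed.
Definition dd n (i j a b : 'I_n) : nat :=
  if (i == a) && (j == b) then 0 else if (i != a) && (j != b) then 1 else 2.

Ltac brute := repeat (case: eqP => [?|?]; subst => //=); try congruence.

Lemma coordQ n (i i' j a b : 'I_n) : i != i' ->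
  absdiff (dd i j a b) (dd i' j a b) =
  if ((a == i) && (b == j)) || ((a == i') && (b == j)) then 2 else (a == i) || (a == i').
Proof. move=> /eqP H; rewrite /dd /absdiff. brute. Qed.

Lemma coord3 n (i i' j j' a b : 'I_n) : i != i' -> j != j' ->
  absdiff (dd i j a b) (dd i' j' a b) =
  ((a == i) || (a == i') || (b == j) || (b == j')) && ~~((a == i) && (b == j')) && ~~((a == i') && (b == j)).
Proof. move=> /eqP H1 /eqP H2; rewrite /dd /absdiff. brute. Qed.
Section Sums.
Variable T : finType.
Implicit Types (S : {set T}) (w : T -> nat).

Lemma sum_one S w z : z \in S -> w z <= \sum_(x in S) w x.
Proof. by move=> Hz; rewrite (bigD1 z) //=; exact: leq_addr. Qed.

Lemma sum_two S w z1 z2 : z1 \in S -> z2 \in S -> z1 != z2 ->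
  w z1 + w z2 <= \sum_(x in S) w x.
Proof.
move=> H1 H2 H12; rewrite (bigD1 z1) //= leq_add2l (bigD1 z2) /=; first exact: leq_addr.
by rewrite H2 eq_sym.
Qed.

Lemma sum_pos S w : 0 < \sum_(x in S) w x -> exists2 z, z \in S & 0 < w z.
Proof.
move=> H; case: (pickP [pred z | (z \in S) && (0 < w z)]) => [z /andP[]|none]; first by exists z.
move: H; rewrite big1 // => z Hz; move: (none z) => /=; rewrite Hz /= lt0n => /negbFE/eqP //.
Qed.

Lemma sum_le1 S (P : pred T) : {in S &, forall z1 z2, P z1 -> P z2 -> z1 = z2} ->
  \sum_(z in S) P z <= 1.
Proof.
move=> U; case: (pickP [pred z | (z \in S) && P z]) => [z0 /andP[H0 P0]|none].
  rewrite (bigD1 z0) //= P0 big1 // => z /andP[Hz Hne].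
  case Pz: (P z) => //; by rewrite (U _ _ Hz H0 Pz P0) eqxx in Hne.
by rewrite big1 // => z Hz; move: (none z) => /=; rewrite Hz /= => ->.
Qed.

Lemma sum_eq1 S z0 : z0 \in S -> \sum_(z in S) (z == z0) = 1.
Proof.
move=> H; rewrite (bigD1 z0) //= eqxx big1 // => z /andP[_ Hz]; by rewrite (negbTE Hz).
Qed.

Lemma part_sum m (f : T -> 'I_m) S w :
  \sum_(i < m) \sum_(z in S) (f z == i) * w z = \sum_(z in S) w z.
Proof.
rewrite exchange_big; apply: eq_bigr => z _.
rewrite (bigD1 (f z)) //= eqxx mul1n big1 ?addn0 // => i Hi.
by rewrite eq_sym (negbTE Hi).
Qed.

Lemma part_sumF m (f : T -> 'I_m) S (F : 'I_m -> nat) :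
  \sum_(z in S) F (f z) = \sum_(i < m) (\sum_(z in S) (f z == i)) * F i.
Proof.
rewrite -(part_sum f S (fun z => F (f z))); apply: eq_bigr => i _.
rewrite big_distrl /=; apply: eq_bigr => z _.
by case: eqP => [->|]; rewrite ?mul0n ?mul1n.
Qed.

Definition rr m (f : T -> 'I_m) S i := \sum_(z in S) (f z == i).

Lemma line_uniq m (f : T -> 'I_m) S z1 z : rr f S (f z1) = 1 -> z1 \in S -> z \in S ->
  f z = f z1 -> z = z1.
Proof.
move=> H1 H2 H3 H4; apply/eqP; apply/negP => /negP Hne.
have := sum_two (fun x => (f x == f z1) : nat) H3 H2 Hne.
by rewrite /rr in H1; rewrite H1 H4 eqxx.
Qed.

Lemma line_uniqN m (f : T -> 'I_m) S z1 z : rr f S (f z1) == 1 -> z1 \in S -> z \in S ->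
  z != z1 -> (f z == f z1) = false.
Proof.
move=> /eqP H1 H2 H3 H4; apply/negP => /eqP E.
by rewrite (line_uniq H1 H2 H3 E) eqxx in H4.
Qed.

Lemma card_sum S : #|S| = \sum_(z in S) 1.
Proof. by rewrite sum1_card. Qed.

Lemma sum_mono S1 S2 w : S1 \subset S2 -> \sum_(z in S1) w z <= \sum_(z in S2) w z.
Proof.
move=> sub; rewrite big_mkcond [X in _ <= X]big_mkcond /=; apply: leq_sum => z _.
case: (boolP (z \in S1)) => H //; by rewrite (subsetP sub _ H).
Qed.

End Sums.

Lemma count_ge n k : \sum_(i < n) (k <= i) = n - k.
Proof.
elim: n => [|n IH]; first by rewrite big_ord0.
rewrite big_ord_recr /= IH; case: (leqP k n) => H /=; lia.
Qed.

Section Core.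
Variable n : nat.
Hypothesis hn : 4 <= n.
Local Notation T := ('I_n * 'I_n)%type.
Local Notation e := (@KnxKn_adj n).
Variables (p q : T -> 'I_n) (mk : 'I_n -> 'I_n -> T).
Hypothesis mkK : forall z, mk (p z) (q z) = z.
Hypothesis pmk : forall a b, p (mk a b) = a.
Hypothesis qmk : forall a b, q (mk a b) = b.
Hypothesis HD : forall x z, gdist e x z = dd (p x) (q x) (p z) (q z).

Lemma eqT x z : (x == z) = (p x == p z) && (q x == q z).
Proof.
apply/eqP/andP => [->|[/eqP H1 /eqP H2]]; first by [].
by rewrite -(mkK x) -(mkK z) H1 H2.
Qed.

Lemma DQ x y z : q x = q y -> p x != p y ->
  Delta e z x y = if (z == x) || (z == y) then 2 else (p z == p x) || (p z == p y).
Proof. move=> Hq Hp; rewrite /Delta !HD Hq coordQ // !eqT Hq //. Qed.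

Lemma D3 x y z : p x != p y -> q x != q y ->
  Delta e z x y = ((p z == p x) || (p z == p y) || (q z == q x) || (q z == q y))
     && (z != mk (p x) (q y)) && (z != mk (p y) (q x)).
Proof. move=> H1 H2; rewrite /Delta !HD coord3 // !eqT !pmk !qmk //. Qed.

Lemma mk_neq a b c d : a != c -> mk a b != mk c d.
Proof. by move=> H; apply: contra H => /eqP/(congr1 p); rewrite !pmk => ->. Qed.

Lemma mk_neq2 a b c d : b != d -> mk a b != mk c d.
Proof. by move=> H; apply: contra H => /eqP/(congr1 q); rewrite !qmk => ->. Qed.

Lemma UBq (S : {set T}) : (forall i, exists2 z, z \in S & p z = i) ->
  forall x y, q x = q y -> x != y -> 2 <= DeltaS e S x y.
Proof.
move=> Hrow x y Hq Hxy.
have Hp : p x != p y by apply: contra Hxy => /eqP E; rewrite eqT E Hq !eqxx.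
have [z1 H1 E1] := Hrow (p x); have [z2 H2 E2] := Hrow (p y).
have Hz : z1 != z2 by apply: contra Hp => /eqP E; rewrite -E1 -E2 E.
apply: leq_trans (sum_two _ H1 H2 Hz); rewrite !DQ // E1 E2 !eqxx /= orbT.
by case: ifP; case: ifP.
Qed.

Section UB3.
Variable S : {set T}.
Variables (cr cc : pred 'I_n).
Hypothesis HR : forall i, cr i -> exists z1 z2, [/\ z1 \in S, z2 \in S, z1 != z2, p z1 = i & p z2 = i].
Hypothesis HR' : forall i, ~~ cr i -> exists2 z, z \in S & (p z = i /\ cc (q z)).
Hypothesis HC : forall j, cc j -> exists z1 z2, [/\ z1 \in S, z2 \in S, z1 != z2, q z1 = j & q z2 = j].
Hypothesis HC' : forall j, ~~ cc j -> exists2 z, z \in S & (q z = j /\ cr (p z)).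
Hypothesis HN : forall z, z \in S -> ~~ (cr (p z) && cc (q z)).

Lemma wit_row i c : p c = i ->
  (exists2 u, u \in S & (p u = i /\ u != c)) \/ [/\ c \in S, ~~ cr i & cc (q c)].
Proof.
move=> Hc; case Hcr: (cr i).
  have [z1 [z2 [H1 H2 H12 E1 E2]]] := HR Hcr; left.
  case: (z1 =P c) => [Ez|Ne]; last by exists z1 => //; split => //; apply/eqP.
  by exists z2 => //; split => //; rewrite -Ez eq_sym.
have [z Hz [Ez Hcz]] := HR' (negbT Hcr).
case: (z =P c) => [Ezc|Ne]; last by left; exists z => //; split => //; apply/eqP.
by right; subst; split.
Qed.

Lemma wit_col j c : q c = j ->
  (exists2 u, u \in S & (q u = j /\ u != c)) \/ [/\ c \in S, ~~ cc j & cr (p c)].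
Proof.
move=> Hc; case Hcr: (cc j).
  have [z1 [z2 [H1 H2 H12 E1 E2]]] := HC Hcr; left.
  case: (z1 =P c) => [Ez|Ne]; last by exists z1 => //; split => //; apply/eqP.
  by exists z2 => //; split => //; rewrite -Ez eq_sym.
have [z Hz [Ez Hcz]] := HC' (negbT Hcr).
case: (z =P c) => [Ezc|Ne]; last by left; exists z => //; split => //; apply/eqP.
by right; subst; split.
Qed.

Lemma UB3 x y : p x != p y -> q x != q y -> 2 <= DeltaS e S x y.
Proof.
move=> Hp Hq.
pose cp := mk (p x) (q y); pose cq := mk (p y) (q x).
pose L z := ((p z == p x) || (p z == p y) || (q z == q x) || (q z == q y))
     && (z != cp) && (z != cq).
have fin : forall u v, u \in S -> v \in S -> u != v -> L u -> L v -> 2 <= DeltaS e S x y.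
  move=> u v Hu Hv Huv Lu Lv; apply: leq_trans (sum_two _ Hu Hv Huv).
  by rewrite !D3 // -/cp -/cq -/(L u) -/(L v) Lu Lv.
have Lr1 : forall u, p u = p x -> u != cp -> L u.
  move=> u E N; rewrite /L E eqxx N /=; apply: contra Hp => /eqP Eu.
  by rewrite -E Eu pmk.
have Lr2 : forall u, p u = p y -> u != cq -> L u.
  move=> u E N; rewrite /L E eqxx orbT N /= andbT; apply: contra Hp => /eqP Eu.
  by rewrite -E Eu pmk.
have Lc1 : forall u, q u = q x -> u != cq -> L u.
  move=> u E N; rewrite /L E eqxx !orbT N /= andbT; apply: contra Hq => /eqP Eu.
  by rewrite -E Eu qmk.
have Lc2 : forall u, q u = q y -> u != cp -> L u.
  move=> u E N; rewrite /L E eqxx !orbT N /=; apply: contra Hq => /eqP Eu.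
  by rewrite -E Eu qmk.
have [[u1 H1 [E1 N1]]|[F1a F1b F1c]] := wit_row (pmk (p x) (q y));
have [[u2 H2 [E2 N2]]|[F2a F2b F2c]] := wit_row (pmk (p y) (q x));
  try (apply: (fin u1 u2) => //; [by apply: contra Hp => /eqP E; rewrite -E1 -E2 E
                                  | exact: Lr1 | exact: Lr2]);
have [[u3 H3 [E3 N3]]|[F3a F3b F3c]] := wit_col (qmk (p y) (q x));
have [[u4 H4 [E4 N4]]|[F4a F4b F4c]] := wit_col (qmk (p x) (q y));
  try (apply: (fin u3 u4) => //; [by apply: contra Hq => /eqP E; rewrite -E3 -E4 E
                                  | exact: Lc1 | exact: Lc2]);
  try (by rewrite qmk in F1c; rewrite F1c in F4b);
  try (by rewrite qmk in F2c; rewrite F2c in F3b);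
  first [ solve [apply: (fin u2 u4) => //; [ apply/eqP => E; have := HN H4;
             rewrite E4 -E E2; rewrite pmk in F3c; rewrite qmk in F1c; by rewrite F3c F1c
           | exact: Lr2 | exact: Lc2]]
        | solve [apply: (fin u1 u3) => //; [ apply/eqP => E; have := HN H3;
             rewrite E3 -E E1; rewrite pmk in F4c; rewrite qmk in F2c; by rewrite F4c F2c
           | exact: Lr1 | exact: Lc1]] ].
Qed.
End UB3.

Section LB.
Variable S : {set T}.
Hypothesis HS : weak_resolving e 2 S.

Lemma emptyRow i : rr p S i = 0 -> forall i', i' != i -> 2 <= rr p S i'.
Proof.
move=> H0 i' Hi'; rewrite leqNgt; apply/negP => H1.
have [j Hj] : exists j, mk i' j \notin S.
  case: (pickP (fun j => mk i' j \notin S)) => [j Hj|none]; first by exists j.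
  exfalso.
  have o0 : 0 < n by lia.
  have o1 : 1 < n by lia.
  have Hm0 : mk i' (Ordinal o0) \in S by apply/negbFE; exact: none.
  have Hm1 : mk i' (Ordinal o1) \in S by apply/negbFE; exact: none.
  have Hne : mk i' (Ordinal o0) != mk i' (Ordinal o1) by apply: mk_neq2.
  have := sum_two (fun z => (p z == i') : nat) Hm0 Hm1 Hne.
  rewrite !pmk eqxx -/(rr p S i'); lia.
have Hxy : mk i j != mk i' j by apply: mk_neq; rewrite eq_sym.
have := HS Hxy.
have : DeltaS e S (mk i j) (mk i' j) <= rr p S i + rr p S i'.
  rewrite /DeltaS /rr -big_split; apply: leq_sum => z Hz.
  rewrite DQ ?pmk ?qmk //; last by rewrite eq_sym.
  have -> : (z == mk i j) = false.
    apply/negP => /eqP E; have := sum_one (fun z => (p z == i) : nat) Hz.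
    by rewrite -/(rr p S i) H0 E pmk eqxx.
  have -> : (z == mk i' j) = false.
    by apply/negP => /eqP E; rewrite -E Hz in Hj.
  by case: (p z == i); case: (p z == i').
lia.
Qed.

Lemma card_rows : #|S| = \sum_(i < n) rr p S i.
Proof.
rewrite card_sum -(part_sum p S (fun _ => 1)); apply: eq_bigr => k _.
by rewrite /rr; apply: eq_bigr => z _; rewrite muln1.
Qed.

Lemma emptyRow_card : (exists i, rr p S i = 0) -> 2 * (n - 1) <= #|S|.
Proof.
case=> i H0; rewrite card_rows (bigD1 i) //= H0 add0n.
have := @leq_sum _ (index_enum 'I_n) (fun k => k != i) (fun _ => 2) (fun k => rr p S k)
   (fun k Hk => emptyRow H0 Hk).
rewrite sum_nat_const cardC1 card_ord => H; apply: leq_trans H; lia.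
Qed.

Definition iso z := (rr p S (p z) == 1) && (rr q S (q z) == 1).
Definition isZ z := (rr p S (p z) != 1) && (rr q S (q z) != 1).

Lemma iso_uniq : {in S &, forall z1 z2, iso z1 -> iso z2 -> z1 = z2}.
Proof.
move=> z1 z2 H1 H2 /andP[Hr1 Hc1] /andP[Hr2 Hc2].
apply/eqP/negPn/negP => Hne.
have Hp : p z1 != p z2.
  apply/negP => /eqP E; by rewrite (line_uniq (eqP Hr1) H1 H2 (esym E)) eqxx in Hne.
have Hq : q z1 != q z2.
  apply/negP => /eqP E; by rewrite (line_uniq (eqP Hc1) H1 H2 (esym E)) eqxx in Hne.
have Hxy : mk (p z1) (q z2) != mk (p z2) (q z1) by apply: mk_neq.
have := HS Hxy; rewrite /DeltaS big1 // => z Hz.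
rewrite D3 ?pmk ?qmk ?mkK //; last by rewrite eq_sym.
case Ez1: (z == z1); first by rewrite /= andbF.
case Ez2: (z == z2); first by rewrite /= andbF.
rewrite (line_uniqN Hr1 H1 Hz (negbT Ez1)) (line_uniqN Hr2 H2 Hz (negbT Ez2)).
by rewrite (line_uniqN Hc1 H1 Hz (negbT Ez1)) (line_uniqN Hc2 H2 Hz (negbT Ez2)).
Qed.

Lemma iso_le1 : \sum_(z in S) iso z <= 1.
Proof. exact: sum_le1 iso_uniq. Qed.

Lemma b1 : (forall i, 0 < rr p S i) -> 2 * n <= #|S| + \sum_(i < n) (rr p S i == 1).
Proof.
move=> Hpos; rewrite card_rows -big_split /=.
have E : \sum_(i < n) 2 = 2 * n by rewrite sum_nat_const card_ord mulnC.
rewrite -E; apply: leq_sum => i _; have := Hpos i; case: eqP; lia.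
Qed.

Lemma b3 : \sum_(i < n) (rr p S i == 1) + \sum_(j < n) (rr q S j == 1) + \sum_(z in S) isZ z
   <= #|S| + \sum_(z in S) iso z.
Proof.
have E : forall f : T -> 'I_n, \sum_(z in S) (rr f S (f z) == 1) = \sum_(i < n) (rr f S i == 1).
  move=> f; rewrite (part_sumF f S (fun i => (rr f S i == 1) : nat)); apply: eq_bigr => i _.
  rewrite -/(rr f S i); by case: eqP => [->|]; rewrite ?muln0 ?muln1.
rewrite -!E card_sum -!big_split /=; apply: leq_sum => z _.
by rewrite /iso /isZ; case: (rr p S (p z) == 1); case: (rr q S (q z) == 1).
Qed.

Lemma rowZ s0 : s0 \in S -> iso s0 -> (forall i, 0 < rr p S i) ->
  forall k, 3 <= rr p S k + \sum_(z in S) (p z == k) * isZ z + 2 * (rr p S k == 1).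
Proof.
move=> Hs0 /andP[Hr0 Hc0] Hpos k.
case E1: (rr p S k == 1); first by move/eqP: E1 => ->; lia.
rewrite muln0 addn0.
case: (ltnP 2 (rr p S k)) => Hr; first lia.
have Hr2 : rr p S k = 2 by have := Hpos k; move/negbT/eqP: E1; lia.
case: (posnP (\sum_(z in S) (p z == k) * isZ z)) => Hz; last lia.
exfalso.
have [u1 Hu1 Hpu1] : exists2 u1, u1 \in S & p u1 = k.
  have [z Hz' Pz] := sum_pos (Hpos k); exists z => //; by move: Pz; case: eqP.
have HZu1 : isZ u1 = false.
  have := sum_one (fun z => (p z == k) * isZ z) Hu1; rewrite Hz Hpu1 eqxx mul1n.
  by case: (isZ u1).
have Hcu1 : rr q S (q u1) == 1.
  by move: HZu1; rewrite /isZ Hpu1 Hr2 /= => /negbFE.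
have Hk : p s0 != k.
  by apply/negP => /eqP E; move: Hr0; rewrite E Hr2.
have Ha : q u1 != q s0.
  apply/negP => /eqP E; have := line_uniq (eqP Hc0) Hs0 Hu1 E => Eu.
  by move: Hk; rewrite -Hpu1 Eu eqxx.
have Hxy : mk (p s0) (q u1) != mk k (q s0) by apply: mk_neq.
have := HS Hxy.
have : DeltaS e S (mk (p s0) (q u1)) (mk k (q s0)) + \sum_(z in S) (z == u1) <= rr p S k.
  rewrite /DeltaS /rr -big_split; apply: leq_sum => z HzS.
  rewrite D3 ?pmk ?qmk // mkK -Hpu1 mkK.
  case Ezu: (z == u1).
    by rewrite (eqP Ezu) eqxx /= andbF.
  case Ezs: (z == s0); first by rewrite /= andbF add0n.
  rewrite (line_uniqN Hr0 Hs0 HzS (negbT Ezs)) (line_uniqN Hc0 Hs0 HzS (negbT Ezs)).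
  rewrite (line_uniqN Hcu1 Hu1 HzS (negbT Ezu)) /=.
  by rewrite !orbF !andbT addn0.
rewrite sum_eq1 // Hr2; lia.
Qed.

Lemma b4 s0 : s0 \in S -> iso s0 -> (forall i, 0 < rr p S i) ->
  3 * n <= #|S| + \sum_(z in S) isZ z + 2 * \sum_(i < n) (rr p S i == 1).
Proof.
move=> Hs0 Hi Hpos.
have E : \sum_(i < n) 3 = 3 * n by rewrite sum_nat_const card_ord mulnC.
rewrite -E card_rows -(part_sum p S isZ) big_distrr /= -!big_split /=.
apply: leq_sum => k _; exact: rowZ Hs0 Hi Hpos k.
Qed.
End LB.
End Core.

Lemma HDfst n (hn : 3 <= n) (x z : 'I_n * 'I_n) :
  gdist (@KnxKn_adj n) x z = dd x.1 x.2 z.1 z.2.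
Proof. rewrite gdistE // /dd; case: x z => [a b] [c d] /=; by rewrite xpair_eqE. Qed.

Lemma HDsnd n (hn : 3 <= n) (x z : 'I_n * 'I_n) :
  gdist (@KnxKn_adj n) x z = dd x.2 x.1 z.2 z.1.
Proof. rewrite HDfst // /dd; by case: (x.1 == z.1); case: (x.2 == z.2). Qed.

Lemma card_bound n (A : {set 'I_n * 'I_n}) (f : 'I_n * 'I_n -> 'I_n) (P : pred ('I_n * 'I_n)) k :
  (forall z, z \in A -> P z -> k <= f z) ->
  {in A &, forall z1 z2, P z1 -> P z2 -> f z1 = f z2 -> z1 = z2} ->
  \sum_(z in A) P z <= n - k.
Proof.
move=> Hf U; rewrite -(part_sum f A (fun z => P z : nat)) -count_ge; apply: leq_sum => i _.
have -> : \sum_(z in A) (f z == i) * P z = \sum_(z in A) ((f z == i) && P z).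
  by apply: eq_bigr => z _; rewrite mulnb.
case: (leqP k i) => Hk.
  apply: leq_trans (sum_le1 (P := fun z => (f z == i) && P z) _) _ => //.
  move=> z1 z2 H1 H2 /andP[/eqP E1 P1] /andP[/eqP E2 P2]; apply: U => //; by rewrite E1 E2.
rewrite big1 // => z Hz; case: eqP => [E|] //=; case Pz: (P z) => //.
have := Hf z Hz Pz; rewrite E; lia.
Qed.

Lemma pad (T : finType) (P : {set T} -> Prop) (S : {set T}) m :
  (forall A B : {set T}, A \subset B -> P A -> P B) -> P S -> #|S| <= m -> m <= #|T| ->
  exists S', P S' /\ #|S'| = m.
Proof.
move=> mono HS H1 H2; move Hd: (m - #|S|) => d.
elim: d S HS H1 Hd => [|d IH] S HS H1 Hd.
  by exists S; split => //; lia.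
have : 0 < #|~: S| by have := cardsC S; lia.
case/card_gt0P => z; rewrite inE => Hz.
apply: (IH (z |: S)).
- apply: mono HS; exact: subsetUr.
- rewrite cardsU1 Hz; lia.
- rewrite cardsU1 Hz; lia.
Qed.

Lemma wr_mono n (A B : {set 'I_n * 'I_n}) :
  A \subset B -> weak_resolving (@KnxKn_adj n) 2 A -> weak_resolving (@KnxKn_adj n) 2 B.
Proof.
move=> sub HA x y Hxy; apply: leq_trans (HA x y Hxy) _; exact: sum_mono.
Qed.

Section Constr.
Variables (n k1 k2 : nat).
Hypotheses (hn : 4 <= n) (hk1 : 0 < k1) (hk2 : 0 < k2) (h1 : k2 + 2 * k1 <= n) (h2 : k1 + 2 * k2 <= n).
Local Notation T := ('I_n * 'I_n)%type.

Let P1 (z : T) := (k1 <= z.1) && (val z.2 == (z.1 - k1) %% k2).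
Let P2 (z : T) := (k2 <= z.2) && (val z.1 == (z.2 - k2) %% k1).
Definition S0 := [set z : T | P1 z || P2 z].

Let o0 : 0 < n. Proof. lia. Qed.
Let o (m : nat) : 'I_n := insubd (Ordinal o0) m.
Let oval m : m < n -> val (o m) = m.
Proof. by move=> Hm; rewrite val_insubd Hm. Qed.

Let HR : forall i : 'I_n, i < k1 -> exists z1 z2, [/\ z1 \in S0, z2 \in S0, z1 != z2, z1.1 = i & z2.1 = i].
Proof.
move=> i Hi; have v1 : val (o (k2 + i)) = k2 + i by apply: oval; lia.
have v2 : val (o (k2 + k1 + i)) = k2 + k1 + i by apply: oval; lia.
exists (i, o (k2 + i)), (i, o (k2 + k1 + i)); split => //.
- rewrite /S0 inE /P2 /= v1 leq_addr addKn modn_small // eqxx; by rewrite orbT.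
- rewrite /S0 inE /P2 /= v2 -addnA leq_addr addKn modnDl modn_small // eqxx; by rewrite orbT.
- by apply/eqP => -[/(congr1 val)]; rewrite v1 v2; lia.
Qed.

Let HR' : forall i : 'I_n, ~~ (i < k1) -> exists2 z, z \in S0 & (z.1 = i /\ z.2 < k2).
Proof.
move=> i Hi; have Hm := ltn_pmod (i - k1) hk2.
have v : val (o ((i - k1) %% k2)) = (i - k1) %% k2 by apply: oval; lia.
exists (i, o ((i - k1) %% k2)); last by split => //=; rewrite v.
by rewrite /S0 inE /P1 /= v eqxx leqNgt Hi.
Qed.

Let HC : forall j : 'I_n, j < k2 -> exists z1 z2, [/\ z1 \in S0, z2 \in S0, z1 != z2, z1.2 = j & z2.2 = j].
Proof.
move=> j Hj; have v1 : val (o (k1 + j)) = k1 + j by apply: oval; lia.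
have v2 : val (o (k1 + k2 + j)) = k1 + k2 + j by apply: oval; lia.
exists (o (k1 + j), j), (o (k1 + k2 + j), j); split => //.
- rewrite /S0 inE /P1 /= v1 leq_addr addKn modn_small // eqxx; by [].
- rewrite /S0 inE /P1 /= v2 -addnA leq_addr addKn modnDl modn_small // eqxx; by [].
- by apply/eqP => -[/(congr1 val)]; rewrite v1 v2; lia.
Qed.

Let HC' : forall j : 'I_n, ~~ (j < k2) -> exists2 z, z \in S0 & (z.2 = j /\ z.1 < k1).
Proof.
move=> j Hj; have Hm := ltn_pmod (j - k2) hk1.
have v : val (o ((j - k2) %% k1)) = (j - k2) %% k1 by apply: oval; lia.
exists (o ((j - k2) %% k1), j); last by split => //=; rewrite v.
by rewrite /S0 inE /P2 /= v eqxx leqNgt Hj orbT.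
Qed.

Let HN : forall z, z \in S0 -> ~~ ((z.1 < k1) && (z.2 < k2)).
Proof.
move=> z; rewrite /S0 inE /P1 /P2 => /orP[/andP[H _]|/andP[H _]];
  by rewrite negb_and -!leqNgt H ?orbT.
Qed.

Lemma S0_res : weak_resolving (@KnxKn_adj n) 2 S0.
Proof.
have h3 : 3 <= n by lia.
pose p1 := fun z : T => z.1. pose p2 := fun z : T => z.2.
pose m1 := fun a b : 'I_n => (a, b). pose m2 := fun a b : 'I_n => (b, a).
have K1 : forall z, m1 (p1 z) (p2 z) = z by case.
have K2 : forall z, m2 (p2 z) (p1 z) = z by case.
have D1 : forall x z, gdist (@KnxKn_adj n) x z = dd (p1 x) (p2 x) (p1 z) (p2 z) := HDfst h3.
have D2 : forall x z, gdist (@KnxKn_adj n) x z = dd (p2 x) (p1 x) (p2 z) (p1 z) := HDsnd h3.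
have Rows : forall i, exists2 z, z \in S0 & p1 z = i.
  move=> i; case: (boolP (i < k1)) => Hi.
    by have [z1 [z2 [H1 _ _ E1 _]]] := HR Hi; exists z1.
  by have [z Hz [E _]] := HR' Hi; exists z.
have Cols : forall j, exists2 z, z \in S0 & p2 z = j.
  move=> j; case: (boolP (j < k2)) => Hj.
    by have [z1 [z2 [H1 _ _ E1 _]]] := HC Hj; exists z1.
  by have [z Hz [E _]] := HC' Hj; exists z.
move=> x y Hxy.
case: (eqVneq x.2 y.2) => Eq.
  exact: (UBq K1 D1 Rows Eq Hxy).
case: (eqVneq x.1 y.1) => Ep.
  exact: (UBq K2 D2 Cols Ep Hxy).
exact: (UB3 (p := p1) (q := p2) (mk := m1) K1 (fun _ _ => erefl) (fun _ _ => erefl) D1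
          (cr := fun i => i < k1) (cc := fun j => j < k2) HR HR' HC HC' HN Ep Eq).
Qed.

Lemma S0_card : #|S0| <= (n - k1) + (n - k2).
Proof.
have -> : #|S0| = \sum_(z in S0) 1 by rewrite card_sum.
apply: (@leq_trans (\sum_(z in S0) P1 z + \sum_(z in S0) P2 z)).
  rewrite -big_split; apply: leq_sum => z; rewrite /S0 inE.
  by case: (P1 z); case: (P2 z).
apply: leq_add.
- apply: (card_bound (f := fun z => z.1)) => [z _ /andP[] //|z1 z2 _ _].
  case: z1 z2 => [a b] [c d]; rewrite /P1 /= => /andP[_ /eqP E1] /andP[_ /eqP E2] E.
  subst c; congr pair; apply: val_inj; exact: (etrans E1 (esym E2)).
- apply: (card_bound (f := fun z => z.2)) => [z _ /andP[] //|z1 z2 _ _].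
  case: z1 z2 => [a b] [c d]; rewrite /P2 /= => /andP[_ /eqP E1] /andP[_ /eqP E2] E.
  subst d; congr pair; apply: val_inj; exact: (etrans E1 (esym E2)).
Qed.
End Constr.

Lemma arith0 n s A B Z : 4 <= n -> 2 * n <= s + A -> 2 * n <= s + B ->
  A + B + Z <= s + 0 -> n + (n + 2) %/ 3 <= s.
Proof. lia. Qed.

Lemma arith1 n s A B Z I : 4 <= n -> A + B + Z <= s + I -> I <= 1 ->
  3 * n <= s + Z + 2 * A -> 3 * n <= s + Z + 2 * B -> n + (n + 2) %/ 3 <= s.
Proof. lia. Qed.

Theorem mainTheorem3 (n : nat) (hn : 4 <= n) :
  is_wdim (@KnxKn_adj n) 2 (n + (n + 2) %/ 3).
Proof.
have h3 : 3 <= n by lia.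
split.
  have hk1 : 0 < n %/ 3 by lia.
  have hk2 : 0 < (n + 1) %/ 3 by lia.
  have h1 : (n + 1) %/ 3 + 2 * (n %/ 3) <= n by lia.
  have h2 : n %/ 3 + 2 * ((n + 1) %/ 3) <= n by lia.
  have := S0_card n (n %/ 3) ((n + 1) %/ 3).
  have := S0_res hn hk1 hk2 h1 h2.
  move=> Hres Hc.
  have Hc' : #|S0 n (n %/ 3) ((n + 1) %/ 3)| <= n + (n + 2) %/ 3 by lia.
  have HT : n + (n + 2) %/ 3 <= #|{: 'I_n * 'I_n}| by rewrite card_prod card_ord; nia.
  have [S' [HS' cS']] := pad (@wr_mono n) Hres Hc' HT.
  by exists S'.
move=> S HS.
pose p1 := fun z : 'I_n * 'I_n => z.1. pose p2 := fun z : 'I_n * 'I_n => z.2.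
pose m1 := fun a b : 'I_n => (a, b). pose m2 := fun a b : 'I_n => (b, a).
have K1 : forall z, m1 (p1 z) (p2 z) = z by case.
have K2 : forall z, m2 (p2 z) (p1 z) = z by case.
have P1 : forall a b, p1 (m1 a b) = a by [].
have Q1 : forall a b, p2 (m1 a b) = b by [].
have P2 : forall a b, p2 (m2 a b) = a by [].
have Q2 : forall a b, p1 (m2 a b) = b by [].
have D1 : forall x z, gdist (@KnxKn_adj n) x z = dd (p1 x) (p2 x) (p1 z) (p2 z) := HDfst h3.
have D2 : forall x z, gdist (@KnxKn_adj n) x z = dd (p2 x) (p1 x) (p2 z) (p1 z) := HDsnd h3.
case: (pickP (fun i => rr p1 S i == 0)) => [i0 Hi0|N1].
  have := emptyRow_card hn K1 P1 Q1 D1 HS (ex_intro _ i0 (eqP Hi0)) => H; apply: leq_trans H; lia.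
case: (pickP (fun j => rr p2 S j == 0)) => [j0 Hj0|N2].
  have := emptyRow_card hn K2 P2 Q2 D2 HS (ex_intro _ j0 (eqP Hj0)) => H; apply: leq_trans H; lia.
have Pos1 : forall i, 0 < rr p1 S i by move=> i; rewrite lt0n; apply/negbT; exact: N1.
have Pos2 : forall i, 0 < rr p2 S i by move=> i; rewrite lt0n; apply/negbT; exact: N2.
have B11 := b1 hn Pos1.
have B12 := b1 hn Pos2.
have B3 := b3 p1 p2 S.
have I1 := iso_le1 K1 P1 Q1 D1 HS.
case: (posnP (\sum_(z in S) iso p1 p2 S z)) => HI.
  rewrite HI in B3; exact: (arith0 hn B11 B12 B3).
have [s0 Hs0 Is0] := sum_pos HI.
have Is1 : iso p1 p2 S s0 by move: Is0; case: (iso p1 p2 S s0).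
have Is2 : iso p2 p1 S s0 by move: Is1; rewrite /iso andbC.
have B41 := b4 hn K1 P1 Q1 D1 HS Hs0 Is1 Pos1.
have B42 := b4 hn K2 P2 Q2 D2 HS Hs0 Is2 Pos2.
have EZ : \sum_(z in S) isZ p2 p1 S z = \sum_(z in S) isZ p1 p2 S z.
  by apply: eq_bigr => z _; rewrite /isZ andbC.
rewrite EZ in B42; exact: (arith1 hn B3 I1 B41 B42).
Qed.
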